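(* Let $n\ge 1$ and let $\vec a=(a_0,\dots,a_n)$ be a vector of nonnegative integers. For a vector $\vec r=(r_1,\dots,r_n)$ of nonnegative integers, set $r_0=r_{n+1}=0$ and define \[ d(\vec a,\vec r)=\sum_{i=1}^{n} r_i\,(a_i+a_{i-1}-r_{i-1}-r_i). \] Call $\vec r$ allowable if $r_i+r_{i+1}\le a_i$ for every $i=0,1,\dots,n$. Let $1\le i\le n$ and suppose that $\vec r=(r_1,\dots,r_n)$ is such that $\vec r\,'=(r_1,\dots,r_{i-1},r_i+1,r_{i+1},\dots,r_n)$ is allowable. Then \[ d(\vec a,\vec r\,')> d(\vec a,\vec r). \]
   Context: The quantity $d(\vec a,\vec r)$ is the dimension of the variety of real chain complexes $0\leftarrow A_0\xleftarrow{d_1}A_1\leftarrow\cdots\xleftarrow{d_n}A_n\leftarrow 0$ with $\dim A_i=a_i$ and $\operatorname{rank} d_i=r_i$; allowable vectors $\vec r$ are exactly the rank vectors for which such a complex exists. *)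

(* Defs.v *)
From mathcomp Require Import all_boot all_order all_algebra.
Set Implicit Arguments. Unset Strict Implicit. Unset Printing Implicit Defensive.
Import Order.TTheory GRing.Theory Num.Theory.

(* Conventions: a vector (a_0,...,a_n) is a function a : nat -> nat of which
   only the values a 0, ..., a n are used; a vector (r_1,...,r_n) is a function
   r : nat -> nat of which only r 1, ..., r n are used. *)

Definition rext (n : nat) (r : nat -> nat) (k : nat) : nat :=
  if (0 < k <= n)%N then r k else 0%N.

Definition dim_cc (n : nat) (a r : nat -> nat) : int :=
  (\sum_(1 <= i < n.+1)
     (rext n r i)%:Z *
       ((a i)%:Z + (a i.-1)%:Z - (rext n r i.-1)%:Z - (rext n r i)%:Z))%R.

Definition allowable (n : nat) (a r : nat -> nat) : Prop :=
  forall i : nat, (i <= n)%N -> (rext n r i + rext n r i.+1 <= a i)%N.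

Definition incr_at (i : nat) (r : nat -> nat) : nat -> nat :=
  fun k => if k == i then (r k).+1 else r k.

(* Main.v *)
Require Import Defs.
From mathcomp Require Import all_boot all_order all_algebra.
From mathcomp Require Import zify ring lra.
Import Order.TTheory GRing.Theory Num.Theory.

Lemma rext_incr n r i k : (1 <= i <= n)%N ->
  rext n (incr_at i r) k = (rext n r k + (k == i))%N.
Proof.
move=> /andP[h1 h2]; rewrite /rext /incr_at.
case: eqP => [->|_]; first by rewrite h1 h2 addn1.
by case: ifP; rewrite addn0.
Qed.

Theorem lemma2p3 (n : nat) (a r : nat -> nat) (i : nat) :
  (1 <= n)%N -> (1 <= i <= n)%N ->
  allowable n a (incr_at i r) ->
  (dim_cc n a r < dim_cc n a (incr_at i r))%R.
Proof.
move=> hn hi hal.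
have Ha1 := hal i.-1 (leq_trans (leq_pred i) (proj2 (andP hi))).
have Ha2 := hal i (proj2 (andP hi)).
have hi1 : (1 <= i)%N by case/andP: hi.
have hin : (i <= n)%N by case/andP: hi.
rewrite !(rext_incr n r i _ hi) in Ha1 Ha2.
have e1 : (i.-1 == i) = false by apply/eqP; lia.
have e2 : (i.+1 == i) = false by apply/eqP; lia.
rewrite prednK // eqxx e1 e2 /= !addn0 !addn1 in Ha1 Ha2.
rewrite /dim_cc.
under [X in (_ < X)%R]eq_bigr => k _ do rewrite !(rext_incr n r i _ hi).
have split3 : forall F : nat -> int, (\sum_(1 <= k < n.+1) F k =
   \sum_(1 <= k < i) F k + F i + \sum_(i.+1 <= k < n.+1) F k)%R.
  move=> F; rewrite (big_cat_nat (n:=i)) //; last by rewrite ltnW.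
  rewrite (big_ltn (m:=i)) ?ltnS //; exact: addrA.
rewrite 2!split3.
have E1 : (\sum_(1 <= k < i) ((rext n r k + (k == i))%:Z *
   ((a k)%:Z + (a k.-1)%:Z - (rext n r k.-1 + (k.-1 == i))%:Z -
    (rext n r k + (k == i))%:Z)) =
   \sum_(1 <= k < i) ((rext n r k)%:Z *
   ((a k)%:Z + (a k.-1)%:Z - (rext n r k.-1)%:Z - (rext n r k)%:Z)))%R.
  apply: eq_big_nat => k /andP[k1 k2].
  have ek : (k == i) = false by apply/eqP; lia.
  have ek' : (k.-1 == i) = false by apply/eqP; lia.
  by rewrite ek ek' !addn0.
rewrite E1 -!addrA ltrD2l.
rewrite eqxx e1.
case: (ltnP i n) => hlt.
- rewrite !(big_ltn (m:=i.+1)) ?ltnS //.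
  have E2 : (\sum_(i.+2 <= k < n.+1) ((rext n r k + (k == i))%:Z *
   ((a k)%:Z + (a k.-1)%:Z - (rext n r k.-1 + (k.-1 == i))%:Z -
    (rext n r k + (k == i))%:Z)) =
   \sum_(i.+2 <= k < n.+1) ((rext n r k)%:Z *
   ((a k)%:Z + (a k.-1)%:Z - (rext n r k.-1)%:Z - (rext n r k)%:Z)))%R.
    apply: eq_big_nat => k /andP[k1 k2].
    have ek : (k == i) = false by apply/eqP; lia.
    have ek' : (k.-1 == i) = false by apply/eqP; lia.
    by rewrite ek ek' !addn0.
  rewrite E2 !addrA ltrD2r e2 /= eqxx addn0 addn1.
  lia.
- have hen : i = n by apply/eqP; rewrite eqn_leq hin.
  subst i.
  rewrite !big_geq // !addr0 /= addn0 addn1.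
  have hz : rext n r n.+1 = 0%N by rewrite /rext ltnn andbF.
  rewrite hz addn0 in Ha2.
  lia.
Qed.
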